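(* Let $A$ be a unital C$^*$-algebra, $H$ a Hilbert space, and let $\Phi : A \to B(H)$ be a unital $*$-homomorphism. Then $\Phi$ is an operational extreme point of the operational convex hull $S$ of the completely positive maps of $A$ into $B(H)$. That is: whenever $\Phi = \sum_{i=1}^m {\rm Ad}\, a_i \circ \Psi_i$ with $\Psi_1,\dots,\Psi_m \in S$ and $\{a_1,\dots,a_m\}$ a finite operational partition of unity in $B(H)$, there exist $z_1,\dots,z_m \in \Phi(A)'$ such that ${\rm Ad}\, a_i \circ \Psi_i = z_i \Phi$ for every $i$.
   Context: For an operator $v$, ${\rm Ad}\, v$ denotes the map $x \mapsto v x v^*$. A finite operational partition of unity of size $m$ in a unital C$^*$-algebra $B$ is a finite set $\{a_1,\dots,a_m\}$ of non-zero elements of $B$ with $\sum_{i=1}^m a_i a_i^* = 1_B$; the set of these is denoted $FOP_m(B)$. For linear maps $\Psi_1,\dots,\Psi_m$ and $\{a_i\}\in FOP_m(B)$, the map $\sum_{i=1}^m {\rm Ad}\, a_i \circ \Psi_i$ is called an operational convex combination of the $\Psi_i$; a set of linear maps is operational convex if it is closed under all operational convex combinations, and the operational convex hull of a set is the smallest operational convex set containing it. If $S$ is an operational convex set of positive linear maps from $A$ into a unital C$^*$-subalgebra $B$ of $B(H)$, a map $\Phi \in S$ is an operational extreme point of $S$ if whenever $\Phi = \sum_{i=1}^m {\rm Ad}\, a_i \circ \Psi_i$ with $\{\Psi_i\}\subset S$ and $\{a_i\} \in FOP_m(B)$, one has ${\rm Ad}\, a_i \circ \Psi_i = z_i \Phi$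 for some $z_i \in \Phi(A)' = \{z \in B(H) : zy = yz \ \forall y \in \Phi(A)\}$, for all $i$. Here $B = B(H)$. A map $\Phi$ is completely positive if $\Phi\otimes 1_k$ is positive on $A\otimes M_k(\mathbb{C})$ for all $k$. *)

(* Defs.v *)
From HB Require Import structures.
From mathcomp Require Import all_boot all_order all_algebra.
From mathcomp Require Import complex.
From mathcomp Require Import reals.
From Stdlib Require Import ClassicalEpsilon.
Set Implicit Arguments. Unset Strict Implicit. Unset Printing Implicit Defensive.
Import Order.TTheory GRing.Theory Num.Theory.
Local Open Scope ring_scope.

Section OpConvex.
Variable R : realType.
Local Notation C := (R[i]).

(* inner product linear in the first argument, conjugate-linear in the second *)
Record hilbert (H : lmodType C) := Hilbert {
  ip : H -> H -> C;
  ipD : forall x y z, ip (x + y) z = ip x z + ip y z;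
  ipZ : forall (c : C) x y, ip (c *: x) y = c * ip x y;
  ip_conj : forall x y, ip y x = conjc (ip x y);
  ip_ge0 : forall x, 0 <= ip x x;
  ip_eq0 : forall x, ip x x = 0 -> x = 0;
  (* completeness w.r.t. the norm ||x|| = sqrt <x,x> (stated with squared norms) *)
  ip_complete : forall u : nat -> H,
    (forall e : R, 0 < e -> exists N, forall p q, (N <= p)%N -> (N <= q)%N ->
        complex.Re (ip (u p - u q) (u p - u q)) < e) ->
    exists l : H, forall e : R, 0 < e -> exists N, forall p, (N <= p)%N ->
        complex.Re (ip (u p - l) (u p - l)) < e
}.

Variables (H : lmodType C) (HS : hilbert H).
Local Notation ipH := (ip HS).
Definition hn2 (x : H) : R := complex.Re (ipH x x).

Definition bounded_op (T : H -> H) : Prop :=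
  (forall x y, T (x + y) = T x + T y) /\
  (forall (c : C) x, T (c *: x) = c *: T x) /\
  (exists M : R, forall x, hn2 (T x) <= M * hn2 x).

(* the Hilbert-space adjoint (exists and is unique for bounded operators) *)
Definition adj (T : H -> H) : H -> H :=
  epsilon (inhabits T) (fun S => forall x y, ipH (T x) y = ipH x (S y)).

Definition Ad (v y : H -> H) : H -> H := fun h => v (y (adj v h)).

(* finite operational partitions of unity of size m in B(H):
   a set {a_1,...,a_m} of m (distinct) non-zero elements with sum a_i a_i^* = 1 *)
Definition FOP (m : nat) (a : 'I_m -> H -> H) : Prop :=
  (forall i, bounded_op (a i)) /\ injective a /\
  (forall i, a i <> (fun _ => 0)) /\
  (forall h, \sum_(i < m) a i (adj (a i) h) = h).

Record cstar (A : algType C) := CStar {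
  star : A -> A;
  cnorm : A -> R;
  starD : forall x y, star (x + y) = star x + star y;
  starZ : forall (c : C) x, star (c *: x) = conjc c *: star x;
  starM : forall x y, star (x * y) = star y * star x;
  starK : forall x, star (star x) = x;
  cnorm_ge0 : forall x, 0 <= cnorm x;
  cnorm_eq0 : forall x, cnorm x = 0 -> x = 0;
  cnormD : forall x y, cnorm (x + y) <= cnorm x + cnorm y;
  cnormZ : forall (c : C) x, cnorm (c *: x) = ComplexField.Normc.normc c * cnorm x;
  cnormM : forall x y, cnorm (x * y) <= cnorm x * cnorm y;
  cnorm_cstar : forall x, cnorm (star x * x) = cnorm x ^+ 2;
  cnorm_complete : forall u : nat -> A,
    (forall e : R, 0 < e -> exists N, forall p q, (N <= p)%N -> (N <= q)%N ->
        cnorm (u p - u q) < e) ->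
    exists l : A, forall e : R, 0 < e -> exists N, forall p, (N <= p)%N ->
        cnorm (u p - l) < e
}.

Variables (A : algType C) (AS : cstar A).
Local Notation st := (star AS).

Definition map_into_BH (Phi : A -> H -> H) : Prop :=
  (forall x y h, Phi (x + y) h = Phi x h + Phi y h) /\
  (forall (c : C) x h, Phi (c *: x) h = c *: Phi x h) /\
  (forall x, bounded_op (Phi x)).

(* Complete positivity: for every k, Phi (x) 1_k maps positive elements of
   A (x) M_k = M_k(A), i.e. elements Y^* Y, to positive operators on H^k. *)
Definition completely_positive (Phi : A -> H -> H) : Prop :=
  map_into_BH Phi /\
  forall (k : nat) (Y : 'I_k -> 'I_k -> A) (v : 'I_k -> H),
    0 <= \sum_(i < k) \sum_(j < k)
           ipH (Phi (\sum_(l < k) st (Y l i) * Y l j) (v j)) (v i).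

Definition opcomb (m : nat) (a : 'I_m -> H -> H) (Psi : 'I_m -> A -> H -> H)
  : A -> H -> H :=
  fun x h => \sum_(i < m) Ad (a i) (Psi i x) h.

Definition operational_convex (S : (A -> H -> H) -> Prop) : Prop :=
  forall (m : nat) (a : 'I_m -> H -> H) (Psi : 'I_m -> A -> H -> H),
    FOP a -> (forall i, S (Psi i)) -> S (opcomb a Psi).

Definition op_convex_hull (P : (A -> H -> H) -> Prop) : (A -> H -> H) -> Prop :=
  fun Phi => forall S, operational_convex S -> (forall Psi, P Psi -> S Psi) -> S Phi.

Definition in_commutant (Phi : A -> H -> H) (z : H -> H) : Prop :=
  bounded_op z /\ forall x h, z (Phi x h) = Phi x (z h).

Definition operational_extreme (S : (A -> H -> H) -> Prop) (Phi : A -> H -> H)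
  : Prop :=
  S Phi /\
  forall (m : nat) (a : 'I_m -> H -> H) (Psi : 'I_m -> A -> H -> H),
    FOP a -> (forall i, S (Psi i)) -> opcomb a Psi = Phi ->
    forall i, exists z, in_commutant Phi z /\
      forall x h, Ad (a i) (Psi i x) h = z (Phi x h).

Definition unital_star_hom (Phi : A -> H -> H) : Prop :=
  map_into_BH Phi /\
  (forall x y h, Phi (x * y) h = Phi x (Phi y h)) /\
  (forall h, Phi 1 h = h) /\
  (forall x, Phi (st x) = adj (Phi x)).

End OpConvex.

(* Main.v *)
Require Import Defs.
From HB Require Import structures.
From mathcomp Require Import all_boot all_order all_algebra.
From mathcomp Require Import complex reals.
From mathcomp Require Import ring lra.
From mathcomp Require classical_sets.
From Stdlib Require Import ClassicalEpsilon.
Set Implicit Arguments. Unset Strict Implicit. Unset Printing Implicit Defensive.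
Import Order.TTheory GRing.Theory Num.Theory.
Local Open Scope ring_scope.


Section Cplx.
Variable R : realType.
Local Notation C := (R[i]).
Local Notation Re := complex.Re.
Local Notation Im := complex.Im.
Lemma ReJ (z : C) : Re (conjc z) = Re z. Proof. by case: z. Qed.
Lemma ImJ (z : C) : Im (conjc z) = - Im z. Proof. by case: z. Qed.
Lemma ReM (z w : C) : Re (z * w) = Re z * Re w - Im z * Im w.
Proof. by case: z; case: w. Qed.
Lemma ImM (z w : C) : Im (z * w) = Re z * Im w + Im z * Re w.
Proof. case: z => a b; case: w => c d /=. ring. Qed.
Lemma ReD (z w : C) : Re (z + w) = Re z + Re w.
Proof. by case: z; case: w. Qed.
Lemma ImD (z w : C) : Im (z + w) = Im z + Im w.
Proof. by case: z; case: w. Qed.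
Lemma ReN (z : C) : Re (- z) = - Re z. Proof. by case: z. Qed.
Lemma ImN (z : C) : Im (- z) = - Im z. Proof. by case: z. Qed.
Lemma ReB (z w : C) : Re (z - w) = Re z - Re w.
Proof. by rewrite ReD ReN. Qed.
Lemma ImB (z w : C) : Im (z - w) = Im z - Im w.
Proof. by rewrite ImD ImN. Qed.
Lemma ReR (s : R) : Re ((s%:C)%C) = s. Proof. by []. Qed.
Lemma ImR (s : R) : Im ((s%:C)%C) = 0. Proof. by []. Qed.
Lemma Re1 : Re (1 : C) = 1. Proof. by []. Qed.
Lemma Im1 : Im (1 : C) = 0. Proof. by []. Qed.
Lemma Re0 : Re (0 : C) = 0. Proof. by []. Qed.
Lemma Im0 : Im (0 : C) = 0. Proof. by []. Qed.
Definition iC : C := Complex 0 1.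
Lemma Rei : Re iC = 0. Proof. by []. Qed.
Lemma Imi : Im iC = 1. Proof. by []. Qed.
Lemma eqC (z w : C) : Re z = Re w -> Im z = Im w -> z = w.
Proof. by case: z; case: w => a b c d /= -> ->. Qed.
Lemma ge0C (z : C) : 0 <= z -> Im z = 0 /\ 0 <= Re z.
Proof. by rewrite lecE => /andP[/eqP -> ->]. Qed.
Lemma leC (z w : C) : z <= w -> Im z = Im w /\ Re z <= Re w.
Proof. by rewrite lecE => /andP[/eqP -> ->]. Qed.
Lemma ge0C_iff (z : C) : Im z = 0 -> 0 <= Re z -> 0 <= z.
Proof. by move=> h1 h2; rewrite lecE h1 eqxx h2. Qed.

Lemma JD (z w : C) : conjc (z + w) = conjc z + conjc w.
Proof. by apply: eqC; rewrite ?ReD ?ImD !(ReJ, ImJ) ?ReD ?ImD // opprD. Qed.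
Lemma JM (z w : C) : conjc (z * w) = conjc z * conjc w.
Proof. apply: eqC; rewrite !(ReJ, ImJ, ReM, ImM); ring. Qed.
Lemma JN (z : C) : conjc (- z) = - conjc z.
Proof. by apply: eqC; rewrite !(ReJ, ImJ, ReN, ImN). Qed.
Lemma J0 : conjc (0 : C) = 0.
Proof. by apply: eqC; rewrite !(ReJ, ImJ, Re0, Im0) ?oppr0. Qed.
Lemma JK (z : C) : conjc (conjc z) = z.
Proof. by apply: eqC; rewrite !(ReJ, ImJ) ?opprK. Qed.
Definition simpC := (ReJ, ImJ, ReM, ImM, ReD, ImD, ReN, ImN, ReR, ImR, Re1, Im1, Re0, Im0, Rei, Imi).

Lemma disc (c b d : R) : 0 <= d -> (forall s, 0 <= c + 2 * s * b + s ^+ 2 * d) ->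
  b ^+ 2 <= c * d.
Proof.
move=> d0 H.
have c0 : 0 <= c by have := H 0; rewrite mulr0 mul0r expr0n /= mul0r !addr0.
have [dz|dp] := eqVneq d 0.
  rewrite dz mulr0.
  have [bz|bn] := eqVneq b 0; first by rewrite bz expr0n.
  have := H (- (c + 1) / (2 * b)); rewrite dz mulr0 addr0.
  have -> : 2 * (- (c + 1) / (2 * b)) * b = - (c + 1) by field; rewrite bn.
  lra.
have dpos : 0 < d by rewrite lt_neqAle eq_sym dp d0.
have := H (- b / d).
have -> : c + 2 * (- b / d) * b + (- b / d) ^+ 2 * d = c - b ^+ 2 / d.
  field; by rewrite dp.
rewrite subr_ge0 ler_pdivrMr //.
Qed.

Lemma disc0 (b d : R) : 0 <= d -> (forall s, 0 <= 2 * s * b + s ^+ 2 * d) -> b = 0.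
Proof.
move=> d0 H; have := @disc 0 b d d0; rewrite mul0r.
have h : forall s, 0 <= 0 + 2 * s * b + s ^+ 2 * d by move=> s; rewrite add0r.
move=> /(_ h) hb. apply/eqP; rewrite -sqrf_eq0; apply/eqP.
apply: le_anti; rewrite hb sqr_ge0 //.
Qed.

Lemma quad_herm (c a b d : C) :
  (forall t, 0 <= c + conjc t * a + t * b + t * conjc t * d) -> b = conjc a.
Proof.
move=> H.
have h1 := (ge0C (H 1)).1; have h2 := (ge0C (H (-1))).1.
have h3 := (ge0C (H iC)).1; have h4 := (ge0C (H (-iC))).1.
move: h1 h2 h3 h4; rewrite ?rmorphN !simpC.
move=> h1 h2 h3 h4.
apply: eqC; rewrite !simpC; lra.
Qed.

Lemma quadCS (c a b d : C) : 0 <= d ->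
  (forall t, 0 <= c + conjc t * a + t * b + t * conjc t * d) ->
  Re a ^+ 2 + Im a ^+ 2 <= Re c * Re d.
Proof.
move=> d0 H; have hb := quad_herm H; subst b.
have [dI dR] := ge0C d0.
have [cI cR] : Im c = 0 /\ 0 <= Re c.
  by apply: ge0C; have := H 0; rewrite rmorph0 !mul0r !addr0.
set N := Re a ^+ 2 + Im a ^+ 2.
have N0 : 0 <= N by rewrite /N addr_ge0 // sqr_ge0.
have key : forall s, 0 <= Re c + 2 * s * N + s ^+ 2 * (N * Re d).
  move=> s; have := (ge0C (H ((s%:C)%C * a))).2.
  rewrite !simpC => h; apply: (le_trans h); rewrite le_eqVlt; apply/orP; left; apply/eqP; rewrite dI /N; ring.
have := disc (mulr_ge0 N0 dR) key.
have [Nz|Np] := eqVneq N 0; first by rewrite Nz => _; rewrite mulr_ge0.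
have Npos : 0 < N by rewrite lt_neqAle eq_sym Np N0.
rewrite expr2 mulrCA (mulrC N) => h.
by rewrite -(ler_pM2l Npos).
Qed.

End Cplx.
Arguments iC {R}.

Section Hil.
Variable R : realType.
Local Notation C := (R[i]).
Local Notation Re := complex.Re.
Local Notation Im := complex.Im.
Variables (H : lmodType C) (HS : hilbert H).
Local Notation ip := (ip HS).
Local Notation hn2 := (hn2 HS).

Lemma ip0l y : ip 0 y = 0.
Proof. by have := ipZ HS 0 0 y; rewrite scale0r mul0r. Qed.
Lemma ipNl x y : ip (- x) y = - ip x y.
Proof. by have := ipZ HS (-1) x y; rewrite scaleN1r mulN1r. Qed.
Lemma ipBl x y z : ip (x - y) z = ip x z - ip y z.
Proof. by rewrite ipD ipNl. Qed.
Lemma ipDr x y z : ip x (y + z) = ip x y + ip x z.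
Proof. by rewrite (ip_conj HS (y + z) x) ipD JD -!ip_conj. Qed.
Lemma ipZr (c : C) x y : ip x (c *: y) = conjc c * ip x y.
Proof. by rewrite (ip_conj HS (c *: y) x) ipZ JM -!ip_conj. Qed.
Lemma ip0r x : ip x 0 = 0.
Proof. by rewrite (ip_conj HS 0 x) ip0l J0. Qed.
Lemma ipNr x y : ip x (- y) = - ip x y.
Proof. by rewrite (ip_conj HS (- y) x) ipNl JN -ip_conj. Qed.
Lemma ipBr x y z : ip x (y - z) = ip x y - ip x z.
Proof. by rewrite ipDr ipNr. Qed.
Lemma ip_suml (I : Type) (r : seq I) (P : pred I) (F : I -> H) y :
  ip (\sum_(i <- r | P i) F i) y = \sum_(i <- r | P i) ip (F i) y.
Proof. exact: (big_morph (fun x => ip x y) (fun a b => ipD HS a b y) (ip0l y)). Qed.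
Lemma ip_sumr (I : Type) (r : seq I) (P : pred I) (F : I -> H) y :
  ip y (\sum_(i <- r | P i) F i) = \sum_(i <- r | P i) ip y (F i).
Proof. exact: (big_morph (fun x => ip y x) (fun a b => ipDr y a b) (ip0r y)). Qed.
Lemma ip_ext a b : (forall k, ip a k = ip b k) -> a = b.
Proof.
move=> h; have e : a - b = 0 by apply: (@ip_eq0 _ _ HS (a - b)); rewrite ipBl h subrr.
by apply/eqP; rewrite -subr_eq0 e.
Qed.
Lemma ip_ext_r a b : (forall k, ip k a = ip k b) -> a = b.
Proof. by move=> h; apply: ip_ext => k; rewrite ip_conj h -ip_conj. Qed.
Lemma hn2_ge0 x : 0 <= hn2 x.
Proof. exact: (ge0C (ip_ge0 HS x)).2. Qed.
Lemma ipexp a y (t : C) :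
  ip (a + t *: y) (a + t *: y) = ip a a + conjc t * ip a y + t * ip y a + t * conjc t * ip y y.
Proof. rewrite ipD !ipDr !ipZ !ipZr; ring. Qed.
Lemma ipCS a y : Re (ip a y) ^+ 2 + Im (ip a y) ^+ 2 <= hn2 a * hn2 y.
Proof.
apply: (@quadCS _ _ _ (ip y a)); first exact: ip_ge0.
by move=> t; rewrite -ipexp; apply: ip_ge0.
Qed.

Definition rip x y := Re (ip x y).
Lemma hn2_rip x : hn2 x = rip x x. Proof. by []. Qed.
Lemma ripDl x y z : rip (x + y) z = rip x z + rip y z. Proof. by rewrite /rip ipD ReD. Qed.
Lemma ripDr x y z : rip x (y + z) = rip x y + rip x z. Proof. by rewrite /rip ipDr ReD. Qed.
Lemma ripBl x y z : rip (x - y) z = rip x z - rip y z. Proof. by rewrite /rip ipBl ReB. Qed.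
Lemma ripBr x y z : rip x (y - z) = rip x y - rip x z. Proof. by rewrite /rip ipBr ReB. Qed.
Lemma ripZl (s : R) x y : rip ((s%:C)%C *: x) y = s * rip x y.
Proof. by rewrite /rip ipZ ReM ReR ImR mul0r subr0. Qed.
Lemma ripZr (s : R) x y : rip x ((s%:C)%C *: y) = s * rip x y.
Proof. by rewrite /rip ipZr ReM ReJ ImJ ReR ImR oppr0 mul0r subr0. Qed.
Lemma ripC x y : rip x y = rip y x.
Proof. by rewrite /rip (ip_conj HS x y) ReJ. Qed.
Lemma ripCS a y : rip a y ^+ 2 <= hn2 a * hn2 y.
Proof.
apply: le_trans (ipCS a y); rewrite /rip lerDl sqr_ge0 //.
Qed.

Section RieszReal.
Variables (g : H -> R) (K : R).
Hypothesis gD : forall x y, g (x + y) = g x + g y.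
Hypothesis gZ : forall (s : R) x, g ((s%:C)%C *: x) = s * g x.
Hypothesis gB : forall x, g x ^+ 2 <= K * hn2 x.
Hypothesis K0 : 0 <= K.

Let J x := hn2 x - 2 * g x.

Lemma Jlb x : hn2 x / 2 - (2 * K + 2) <= J x.
Proof.
have g2 := gB x; have h0 := hn2_ge0 x; rewrite /J.
set r := 2 * K + 2; set h := hn2 x; set G := g x.
have sq : 0 <= (G - r) ^+ 2 by exact: sqr_ge0.
have K0x := K0; have rp : 0 < r by rewrite /r; lra.
have e1 : r * (2 * G) <= r * (h / 2 + r).
  have : K * h <= h / 2 * r.
    have -> : h / 2 * r = K * h + h by rewrite /r; field.
    by rewrite lerDl.
  move: sq g2; rewrite -/G -/h; nra.
have e2 : 2 * G <= h / 2 + r by rewrite -(ler_pM2l rp).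
lra.
Qed.


Lemma Jpar a b : hn2 (a - b) = 2 * J a + 2 * J b - 4 * J ((2^-1%:C)%C *: (a + b)).
Proof.
rewrite /J !hn2_rip gZ gD ripBl !ripBr ripZl ripZr !ripDl !ripDr (ripC b a).
by field.
Qed.

Lemma Jshift a x (s : R) :
  J (a + (s%:C)%C *: x) = J a + 2 * s * rip a x + s ^+ 2 * hn2 x - 2 * s * g x.
Proof.
rewrite /J !hn2_rip gD gZ !ripDl !ripDr !ripZl !ripZr (ripC x a).
ring.
Qed.

Lemma small (e : R) : 0 < e -> exists N, forall n, (N <= n)%N -> ((n.+1)%:R)^-1 < e.
Proof.
move=> ep; exists (Num.bound (e^-1)) => n hn.
have ei : 0 < e^-1 by rewrite invr_gt0.
have b := archi_boundP (ltW ei).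
have : (Num.bound e^-1)%:R <= (n.+1)%:R :> R by rewrite ler_nat; apply: leq_trans hn _.
move=> hle.
have np : 0 < (n.+1)%:R :> R by rewrite ltr0Sn.
rewrite -[X in X < _]mul1r ltr_pdivrMr //.
have : e^-1 < (n.+1)%:R by apply: lt_le_trans b hle.
move=> h; rewrite -(ltr_pM2l ep) mulfV ?gt_eqF // in h.
Qed.

Lemma riesz_real : exists l, forall x, g x = rip l x.
Proof.
have K0x := K0.
pose E : R -> Prop := fun y => exists x, y = - J x.
have hs : classical_sets.has_sup E.
  split; first by exists (- J 0), 0.
  exists (2 * K + 2) => y [x ->].
  have := Jlb x; have := hn2_ge0 x; lra.
pose m := - sup E.
have minf x : m <= J x.
  have := sup_upper_bound hs; move=> /(_ (- J x)) h.
  have : - J x <= sup E by apply: h; exists x.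
  rewrite /m; lra.
have hu : forall n : nat, exists x, J x < m + ((n.+1)%:R)^-1.
  move=> n; have ep : 0 < ((n.+1)%:R : R)^-1 by rewrite invr_gt0 ltr0Sn.
  have [y [x ->] hy] := sup_adherent ep hs.
  exists x; rewrite /m; move: hy; move: (_^-1) => w; lra.
pose u n := epsilon (inhabits 0) (fun x => J x < m + ((n.+1)%:R)^-1).
have uP n : J (u n) < m + ((n.+1)%:R)^-1 by exact: (epsilon_spec _ _ (hu n)).
have cau p q : hn2 (u p - u q) <= 2 * ((p.+1)%:R)^-1 + 2 * ((q.+1)%:R)^-1.
  rewrite Jpar; have := minf ((2^-1%:C)%C *: (u p + u q)).
  have := uP p; have := uP q.
  move: (((p.+1)%:R : R)^-1) (((q.+1)%:R : R)^-1) => wp wq. lra.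
have [l hl] : exists l : H, forall e : R, 0 < e -> exists N, forall p, (N <= p)%N ->
        hn2 (u p - l) < e.
  have hc : forall e : R, 0 < e -> exists N, forall p q, (N <= p)%N -> (N <= q)%N ->
        hn2 (u p - u q) < e.
    move=> e ep.
    have e4 : 0 < e / 4 by rewrite divr_gt0.
    have [N hN] := small e4.
    exists N => p q hp hq.
    have := cau p q; have := hN p hp; have := hN q hq.
    move: (((p.+1)%:R : R)^-1) (((q.+1)%:R : R)^-1) => wp wq. lra.
  have [l0 hl0] := @ip_complete _ _ HS u hc.
  by exists l0.
exists l => x.
apply/eqP; rewrite -subr_eq0; apply/eqP; rewrite (ripC l x).
set gam := g x - rip x l.
suff : - gam = 0 by move/eqP; rewrite oppr_eq0 => /eqP.
apply: (disc0 (hn2_ge0 x)) => s.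
set v := 2 * s * - gam + s ^+ 2 * hn2 x.
suff hv : forall eps, 0 < eps -> - eps <= v.
  rewrite leNgt; apply/negP => vn.
  have vp : 0 < - v / 2 by lra.
  have := hv _ vp; lra.
move=> eps ep.
set t := s ^+ 2 * hn2 x.
have t0 : 0 <= t by rewrite mulr_ge0 ?sqr_ge0 ?hn2_ge0.
set e1 := eps ^+ 2 / (16 * t + 1).
have tp : 0 < 16 * t + 1 by lra.
have e1p : 0 < e1 by rewrite divr_gt0 // exprn_gt0.
have [N1 hN1] := hl e1 e1p.
have e2 : 0 < eps / 2 by rewrite divr_gt0.
have [N2 hN2] := small e2.
pose n := maxn N1 N2.
have hd := hN1 n (leq_maxl _ _).
have hsm := hN2 n (leq_maxr _ _).
have h1 := minf (u n + (s%:C)%C *: x); rewrite Jshift in h1.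
have h2 := uP n.
set d := u n - l in hd.
have rr : rip (u n) x = rip l x + rip d x by rewrite /d ripBl; ring.
have cs := ripCS d x.
set rho := rip d x in rr cs.
have k1 : (2 * s * rho) ^+ 2 <= 4 * t * hn2 d.
  have -> : (2 * s * rho) ^+ 2 = 4 * s ^+ 2 * rho ^+ 2 by ring.
  have -> : 4 * t * hn2 d = 4 * s ^+ 2 * (hn2 d * hn2 x) by rewrite /t; ring.
  by rewrite ler_wpM2l // mulr_ge0 // sqr_ge0.
have k2 : 4 * t * hn2 d <= 4 * t * e1.
  apply: ler_wpM2l; [by rewrite mulr_ge0 | exact: ltW].
have k3 : 4 * t * e1 < (eps / 2) ^+ 2.
  have -> : 4 * t * e1 = (eps / 2) ^+ 2 - (eps / 2) ^+ 2 / (16 * t + 1).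
    rewrite /e1; field; lra.
  rewrite ltrBlDr ltrDl divr_gt0 // exprn_gt0 //.
have k4 : (2 * s * rho) ^+ 2 < (eps / 2) ^+ 2 by apply: le_lt_trans k3; apply: le_trans k2.
have k5 : 2 * s * rho < eps / 2 by nra.
rewrite rr in h1.
have : 2 * s * (rip l x + rho) = 2 * s * rip l x + 2 * s * rho by ring.
have : 2 * s * - gam = 2 * s * rip x l - 2 * s * g x by rewrite /gam; ring.
rewrite (ripC x l) /v /t => ha hb.
rewrite ha; move: h1 h2 hsm; rewrite hb; move: (((n.+1)%:R : R)^-1) => w; lra.
Qed.

End RieszReal.

Lemma riesz (f : H -> C) :
  (forall x y, f (x + y) = f x + f y) -> (forall (c : C) x, f (c *: x) = c * f x) ->
  (exists K, 0 <= K /\ forall x, Re (f x) ^+ 2 + Im (f x) ^+ 2 <= K * hn2 x) ->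
  exists u, forall x, f x = ip x u.
Proof.
move=> fD fZ [K [K0 fB]].
have [l hl] : exists l, forall x, Re (f x) = rip l x.
  apply: (@riesz_real (fun x => Re (f x)) K) => //.
  - by move=> x y; rewrite fD ReD.
  - by move=> s x; rewrite fZ ReM ReR ImR mul0r subr0.
  - move=> x; apply: le_trans (fB x); rewrite lerDl sqr_ge0 //.
exists l => x; apply: eqC.
  by rewrite hl /rip (ip_conj HS x l) ReJ.
have := hl (iC *: x); rewrite fZ /rip ipZr (ip_conj HS x l).
rewrite !simpC; lra.
Qed.

Definition isadj (b c : H -> H) := forall x y, ip (b x) y = ip x (c y).
Definition lin (T : H -> H) :=
  (forall x y, T (x + y) = T x + T y) /\ (forall (c : C) x, T (c *: x) = c *: T x).

Lemma adjP T : bounded_op HS T -> isadj T (adj HS T).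
Proof.
case=> TD [TZ [M TM]].
have ex : forall y, exists u, forall x, ip (T x) y = ip x u.
  move=> y; apply: riesz.
  - by move=> a b; rewrite TD ipD.
  - by move=> c a; rewrite TZ ipZ.
  - exists (hn2 y * Num.max M 0); split.
      by rewrite mulr_ge0 ?hn2_ge0 // le_max lexx orbT.
    move=> x; apply: le_trans (ipCS (T x) y) _.
    rewrite mulrC -mulrA; apply: ler_wpM2l; first exact: hn2_ge0.
    apply: le_trans (TM x) _; apply: ler_wpM2r; first exact: hn2_ge0.
    by rewrite le_max lexx.
pose S y := epsilon (inhabits 0) (fun u => forall x, ip (T x) y = ip x u).
have hS : exists S0 : H -> H, forall x y, ip (T x) y = ip x (S0 y).
  by exists S => x y; exact: (epsilon_spec _ _ (ex y)) x.
exact: (epsilon_spec (inhabits T) _ hS).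
Qed.

Lemma adj_lin b c : isadj b c -> lin c.
Proof.
move=> hb; split.
  move=> x y; apply: ip_ext_r => k; by rewrite -hb !ipDr -!hb.
move=> a x; apply: ip_ext_r => k; by rewrite -hb !ipZr -!hb.
Qed.

Lemma bounded_lin T : bounded_op HS T -> lin T.
Proof. by case=> h1 [h2 _]. Qed.

Lemma linN T x : lin T -> T (- x) = - T x.
Proof. by case=> _ hz; rewrite -scaleN1r hz scaleN1r. Qed.
Lemma lin0 T : lin T -> T 0 = 0.
Proof. by case=> _ hz; have := hz 0 0; rewrite !scale0r. Qed.


Section Main.
Variables (A : algType C) (AS : cstar A).
Local Notation st := (star AS).

Lemma st0 : st 0 = 0.
Proof. by have := starZ AS 0 0; rewrite J0 !scale0r. Qed.
Lemma st1 : st 1 = 1.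
Proof.
have e : st 1 = st 1 * st (st 1) by rewrite starK mulr1.
by rewrite e -starM mulr1 starK.
Qed.

Definition fm (F : A -> H -> H) n (y : 'I_n -> A) (v : 'I_n -> H) : C :=
  \sum_(i < n) \sum_(j < n) ip (F (st (y i) * y j) (v j)) (v i).
Arguments fm : clear implicits.

Definition good (F : A -> H -> H) :=
  (forall x, lin (F x)) /\ forall n y v, 0 <= fm F n y v.

Lemma CP_fm F : completely_positive HS AS F -> forall n y v, 0 <= fm F n y v.
Proof.
case=> _ hF [|n] y v; first by rewrite /fm big_ord0.
pose Y := fun (l j : 'I_n.+1) => if val l == 0%N then y j else 0.
have h := hF n.+1 Y v.
have e : forall i j : 'I_n.+1, \sum_(l < n.+1) st (Y l i) * Y l j = st (y i) * y j.
  move=> i j; rewrite big_ord_recl /= big1 ?addr0 // => l _.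
  by rewrite /Y /= st0 mul0r.
apply: (le_trans h); rewrite le_eqVlt; apply/orP; left; apply/eqP.
by apply: eq_bigr => i _; apply: eq_bigr => j _; rewrite e.
Qed.

Lemma CP_good F : completely_positive HS AS F -> good F.
Proof.
move=> hF; split; last exact: CP_fm.
by move=> x; apply: bounded_lin; case: hF => [[_ [_ h]] _].
Qed.

Lemma fm_sum m (F : A -> H -> H) (G : 'I_m -> A -> H -> H) n y v :
  (forall x h, F x h = \sum_(r < m) G r x h) ->
  fm F n y v = \sum_(r < m) fm (G r) n y v.
Proof.
move=> hF; rewrite /fm.
under eq_bigr => i _ do under eq_bigr => j _ do rewrite hF ip_suml.
under eq_bigr => i _ do rewrite exchange_big.
by rewrite exchange_big.
Qed.

Lemma fm_adj (b c : H -> H) (F : A -> H -> H) n y v : isadj b c ->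
  fm (fun x h => b (F x (c h))) n y v = fm F n y (fun j => c (v j)).
Proof.
move=> hb; rewrite /fm; apply: eq_bigr => i _; apply: eq_bigr => j _.
by rewrite hb.
Qed.

Lemma good_opconv : operational_convex HS good.
Proof.
move=> m a Psi [ba _] hP; split.
  move=> x; split.
    move=> h1 h2; rewrite /opcomb -big_split /=; apply: eq_bigr => r _.
    rewrite /Ad (adj_lin (adjP (ba r))).1 ((hP r).1 x).1 (bounded_lin (ba r)).1 //.
  move=> c h; rewrite /opcomb scaler_sumr; apply: eq_bigr => r _.
  rewrite /Ad (adj_lin (adjP (ba r))).2 ((hP r).1 x).2 (bounded_lin (ba r)).2 //.
move=> n y v.
rewrite (@fm_sum m _ (fun r x h => a r (Psi r x (adj HS (a r) h)))) //.
apply: sumr_ge0 => r _ /=; rewrite (@fm_adj (a r) (adj HS (a r)) (Psi r)); last exact: adjP.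
exact: (hP r).2.
Qed.

Lemma fm1 F y0 v0 : fm F 1 (fun _ => y0) (fun _ => v0) = ip (F (st y0 * y0) v0) v0.
Proof. by rewrite /fm !big_ord1. Qed.

Lemma fm2 F y0 y1 v0 v1 :
  fm F 2 (fun j => nth y0 [:: y0; y1] j) (fun j => nth v0 [:: v0; v1] j) =
  ip (F (st y0 * y0) v0) v0 + ip (F (st y0 * y1) v1) v0 +
  ip (F (st y1 * y0) v0) v1 + ip (F (st y1 * y1) v1) v1.
Proof. rewrite /fm !big_ord_recl !big_ord0 /=; ring. Qed.

Lemma fm3 F y0 y1 y2 v0 v1 v2 :
  fm F 3 (fun j => nth y0 [:: y0; y1; y2] j) (fun j => nth v0 [:: v0; v1; v2] j) =
  ip (F (st y0 * y0) v0) v0 + ip (F (st y0 * y1) v1) v0 + ip (F (st y0 * y2) v2) v0 +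
  ip (F (st y1 * y0) v0) v1 + ip (F (st y1 * y1) v1) v1 + ip (F (st y1 * y2) v2) v1 +
  ip (F (st y2 * y0) v0) v2 + ip (F (st y2 * y1) v1) v2 + ip (F (st y2 * y2) v2) v2.
Proof. rewrite /fm !big_ord_recl !big_ord0 /=; ring. Qed.

Lemma ge0_eq (a b : C) : 0 <= a -> a = b -> 0 <= b.
Proof. by move=> h <-. Qed.

Lemma main_sec (Phi : A -> H -> H) : unital_star_hom HS AS Phi ->
  operational_extreme HS (op_convex_hull HS (completely_positive HS AS)) Phi.
Proof.
case=> mb [hM [h1 hst]].
have Plin x : lin (Phi x) := bounded_lin (mb.2.2 x).
have Padj x : isadj (Phi x) (Phi (st x)) by rewrite hst; apply: adjP (mb.2.2 x).
have PadjL y w k : ip (Phi (st y) w) k = ip w (Phi y k).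
  by rewrite (ip_conj HS k (Phi (st y) w)) -Padj -(ip_conj HS (Phi y k) w).
have Phi0 h : Phi 0 h = 0.
  by have := mb.2.1 0 0 h; rewrite !scale0r.
have Psum k (f : 'I_k -> A) h : Phi (\sum_(l < k) f l) h = \sum_(l < k) Phi (f l) h.
  apply: (big_ind2 (fun a b => Phi a h = b)) => //.
  by move=> x1 x2 y1 y2 e1 e2; rewrite mb.1 e1 e2.
split.
  move=> S hS hCP; apply: hCP; split => // k Y v.
  under eq_bigr => i _ do under eq_bigr => j _ do rewrite Psum ip_suml.
  under eq_bigr => i _ do under eq_bigr => j _ do under eq_bigr => l _ do rewrite hM PadjL.
  under eq_bigr => i _ do rewrite exchange_big.
  rewrite exchange_big /=; apply: sumr_ge0 => l _.
  under eq_bigr => i _ do rewrite -ip_suml.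
  by rewrite -ip_sumr; apply: ip_ge0.
move=> m a Psi [ba _] hS hcomb i.
have goodP r : good (Psi r) := hS r good good_opconv (fun F hF => CP_good hF).
pose phi r x h := a r (Psi r x (adj HS (a r) h)).
have hPhi x h : Phi x h = \sum_(r < m) phi r x h by rewrite -hcomb.
have pos r n y v : 0 <= fm (phi r) n y v.
  rewrite /phi (@fm_adj (a r) (adj HS (a r)) (Psi r)); last exact: adjP.
  exact: (goodP r).2.
have fmle n y v : fm (phi i) n y v <= fm Phi n y v.
  rewrite (@fm_sum m Phi phi n y v hPhi) (bigD1 i) //= lerDl.
  by apply: sumr_ge0 => r _; apply: pos.
have linphi x : lin (phi i x).
  split.
    move=> h1' h2'; rewrite /phi (adj_lin (adjP (ba i))).1 ((goodP i).1 x).1.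
    by rewrite (bounded_lin (ba i)).1.
  move=> c h; rewrite /phi (adj_lin (adjP (ba i))).2 ((goodP i).1 x).2.
  by rewrite (bounded_lin (ba i)).2.
have phiZ x c g : phi i x (c *: g) = c *: phi i x g by rewrite (linphi x).2.
have phiN x g : phi i x (- g) = - phi i x g by rewrite (linN _ (linphi x)).
have PhiN x g : Phi x (- g) = - Phi x g by rewrite (linN _ (Plin x)).
pose z := phi i 1.
have herm y0 h k : ip (phi i (st y0) k) h = conjc (ip (phi i y0 h) k).
  apply: (@quad_herm _ (ip (phi i (st y0 * y0) h) h) (ip (phi i y0 h) k)
            (ip (phi i (st y0) k) h) (ip (phi i 1 k) k)).
  move=> t; have := pos i 2 (fun j => nth y0 [:: y0; 1] j) (fun j => nth h [:: h; t *: k] j).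
  rewrite fm2 !st1 !mulr1 !mul1r !phiZ !ipZ !ipZr => hp; apply: ge0_eq hp _; ring.
have null x h : phi i x h = z (Phi x h).
  set w := Phi x h.
  have cP : fm Phi 2 (fun j => nth x [:: x; 1] j) (fun j => nth h [:: h; - w] j) = 0.
    rewrite fm2 !st1 !mulr1 !mul1r hM h1 PhiN !ipNl !ipNr -/w; ring.
  have c0 : fm (phi i) 2 (fun j => nth x [:: x; 1] j) (fun j => nth h [:: h; - w] j) = 0.
    by apply: le_anti; rewrite pos andbT -cP fmle.
  apply: ip_ext => k.
  have d0 : 0 <= ip (z k) k.
    by have := pos i 1 (fun _ => 1) (fun _ => k); rewrite fm1 st1 mulr1.
  have := @quadCS _ (fm (phi i) 2 (fun j => nth x [:: x; 1] j) (fun j => nth h [:: h; - w] j))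
    (ip (phi i x h) k - ip (z w) k)
    (ip (phi i (st x) k) h - ip (z k) w) (ip (z k) k) d0.
  have hq : forall t : C, 0 <= fm (phi i) 2 (fun j => nth x [:: x; 1] j)
      (fun j => nth h [:: h; - w] j) + conjc t * (ip (phi i x h) k - ip (z w) k) +
      t * (ip (phi i (st x) k) h - ip (z k) w) + t * conjc t * ip (z k) k.
    move=> t; have := pos i 3 (fun j => nth x [:: x; 1; 1] j)
      (fun j => nth h [:: h; - w; t *: k] j).
    rewrite fm3 fm2 !st1 !mulr1 !mul1r !phiZ !phiN !ipZ !ipZr !ipNl !ipNr /z.
    by move=> hp; apply: ge0_eq hp _; ring.
  move=> /(_ hq); rewrite c0 Re0 mul0r => hle.
  have hre : Re (ip (phi i x h) k - ip (z w) k) = 0.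
    by apply/eqP; rewrite -sqrf_eq0; apply/eqP; apply: le_anti; rewrite sqr_ge0 andbT;
       apply: le_trans hle; rewrite lerDl sqr_ge0.
  have him : Im (ip (phi i x h) k - ip (z w) k) = 0.
    by apply/eqP; rewrite -sqrf_eq0; apply/eqP; apply: le_anti; rewrite sqr_ge0 andbT;
       apply: le_trans hle; rewrite lerDr sqr_ge0.
  have : ip (phi i x h) k - ip (z w) k = 0 by apply: eqC; rewrite ?hre ?him.
  by move/eqP; rewrite subr_eq0 => /eqP.
have comm x h : z (Phi x h) = Phi x (z h).
  rewrite -null; apply: ip_ext => k.
  rewrite -[ip (phi i x h) k]JK -herm null.
  have e2 := herm 1 h (Phi (st x) k); rewrite st1 in e2.
  by rewrite -/z e2 JK Padj.
exists z; split; last by move=> x h; exact: null x h.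
split => //.
split; first exact: (linphi 1).1.
split; first exact: (linphi 1).2.
exists 1 => h; rewrite mul1r.
set k := z h.
have d0 : 0 <= ip (z k) k.
  by have := pos i 1 (fun _ => 1) (fun _ => k); rewrite fm1 st1 mulr1.
have hq : forall t : C, 0 <= ip (z h) h + conjc t * ip (z h) k + t * ip (z k) h +
    t * conjc t * ip (z k) k.
  move=> t; have := pos i 2 (fun j => nth 1 [:: 1; 1] j) (fun j => nth h [:: h; t *: k] j).
  rewrite fm2 !st1 !mulr1 !phiZ !ipZ !ipZr /z.
  by move=> hp; apply: ge0_eq hp _; ring.
have qc := quadCS d0 hq.
have le1 g : Re (ip (z g) g) <= hn2 g /\ 0 <= Re (ip (z g) g).
  have := fmle 1 (fun _ => 1) (fun _ => g); have := pos i 1 (fun _ => 1) (fun _ => g).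
  rewrite !fm1 st1 mulr1 h1 /z => p1 p2.
  by split; [exact: (leC p2).2 | exact: (ge0C p1).2].
have [c1 c2] := le1 h; have [d1 d2] := le1 k.
have kk : Re (ip (z h) k) = hn2 k by [].
rewrite kk in qc.
have hk0 := hn2_ge0 k; have hh0 := hn2_ge0 h.
have q2 : hn2 k ^+ 2 <= hn2 h * hn2 k.
  apply: le_trans (_ : Re (ip (z h) h) * Re (ip (z k) k) <= _).
    by apply: le_trans qc; rewrite lerDl sqr_ge0.
  by apply: ler_pM.
nra.
Qed.

End Main.

End Hil.

Theorem mainTheorem2 (R : realType) (H : lmodType (R[i])) (HS : hilbert H)
  (A : algType (R[i])) (AS : cstar A) (Phi : A -> H -> H) :
  unital_star_hom HS AS Phi ->
  operational_extreme HS (op_convex_hull HS (completely_positive HS AS)) Phi.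
Proof. exact: (@main_sec R H HS A AS Phi). Qed.
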